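(* Let $\mathsf{D}$ be an optiongraph and let $\mathrm{Con}(\mathsf{D})$ be the set of congruence relations on $\mathsf{D}$. Then the union ${\bowtie}:=\bigcup\mathrm{Con}(\mathsf{D})$ is a congruence relation on $\mathsf{D}$ (hence the maximum congruence relation).
   Context: An optiongraph is a nonempty set $\mathsf{D}$ of positions together with an option function $\mathrm{Opt}:\mathsf{D}\to 2^{\mathsf{D}}$. For an equivalence relation $\theta$ on $\mathsf{D}$, write $[p]_\theta$ for the class of $p$ and, for $S\subseteq\mathsf{D}$, $[S]_\theta:=\{[s]_\theta\mid s\in S\}$. An equivalence relation $\theta$ on $\mathsf{D}$ is a congruence relation if $p\mathrel{\theta}q$ implies $[\mathrm{Opt}(p)]_\theta=[\mathrm{Opt}(q)]_\theta$. *)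

(* Defs.v *)
From Stdlib Require Import RelationClasses.

Record optiongraph := {
  pos :> Type;
  pos_inhabited : inhabited pos;
  Opt : pos -> (pos -> Prop)
}.

Definition eqclass {D : Type} (theta : D -> D -> Prop) (p : D) : D -> Prop :=
  fun x => theta p x.

Definition classes {D : Type} (theta : D -> D -> Prop) (S : D -> Prop) : (D -> Prop) -> Prop :=
  fun C => exists s, S s /\ C = eqclass theta s.

Definition is_congruence (G : optiongraph) (theta : G -> G -> Prop) : Prop :=
  Equivalence theta /\
  forall p q : G, theta p q -> classes theta (Opt G p) = classes theta (Opt G q).

Definition Con (G : optiongraph) : (G -> G -> Prop) -> Prop := is_congruence G.

Definition bowtie (G : optiongraph) : G -> G -> Prop :=
  fun p q => exists theta, Con G theta /\ theta p q.

(* Main.v *)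
Require Import Defs.
From Stdlib Require Import RelationClasses Relation_Operators FunctionalExtensionality PropExtensionality.

Section S.
Variable G : optiongraph.
Let R := bowtie G.
Let T := clos_trans G R.

Lemma eq_cong : Con G (@eq G).
Proof. split. typeclasses eauto. intros p q ->; reflexivity. Qed.

Lemma R_refl x : R x x.
Proof. exists (@eq G). split; [apply eq_cong|reflexivity]. Qed.

Lemma R_sym x y : R x y -> R y x.
Proof. intros [th [[E C] H]]. exists th; split; [split; auto|]. symmetry; exact H. Qed.

Lemma T_sym x y : T x y -> T y x.
Proof.
  induction 1. apply t_step, R_sym; auto. eapply t_trans; eauto.
Qed.

Lemma T_equiv : Equivalence T.
Proof.
  split. intro x; apply t_step, R_refl. intros x y; apply T_sym.
  intros x y z; apply t_trans.
Qed.

Lemma T_step p q : T p q -> forall a, Opt G p a -> exists b, Opt G q b /\ T a b.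
Proof.
  induction 1 as [p q H|p m q _ IH1 _ IH2].
  - intros a Ha. destruct H as [th [[E C] H]].
    assert (Hc : classes th (Opt G p) (eqclass th a)) by (exists a; auto).
    rewrite (C p q H) in Hc. destruct Hc as [b [Hb Eb]].
    exists b; split; auto. apply t_step. exists th; split; [split; auto|].
    assert (eqclass th b b) by (unfold eqclass; reflexivity).
    rewrite <- Eb in H0. exact H0.
  - intros a Ha. destruct (IH1 a Ha) as [b [Hb Tb]].
    destruct (IH2 b Hb) as [c [Hc Tc]]. exists c; split; auto.
    eapply t_trans; eauto.
Qed.

Lemma eqclass_T a b : T a b -> eqclass T a = eqclass T b.
Proof.
  intros H. extensionality x. apply propositional_extensionality.
  unfold eqclass. pose proof T_equiv. split; intros.
  - apply T_sym in H. eapply t_trans; eauto.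
  - eapply t_trans; eauto.
Qed.

Lemma classes_half p q : T p q -> forall C, classes T (Opt G p) C -> classes T (Opt G q) C.
Proof.
  intros H C [a [Ha ->]]. destruct (T_step p q H a Ha) as [b [Hb Tb]].
  exists b; split; auto. apply eqclass_T; auto.
Qed.

Lemma T_cong : Con G T.
Proof.
  split. apply T_equiv. intros p q H. extensionality C.
  apply propositional_extensionality. split; apply classes_half; auto.
  apply T_sym; auto.
Qed.

Lemma R_eq_T : R = T.
Proof.
  extensionality x. extensionality y. apply propositional_extensionality. split.
  - apply t_step.
  - intros H. exists T. split; auto. apply T_cong.
Qed.
End S.

Theorem mainTheorem3 (G : optiongraph) : is_congruence G (bowtie G).
Proof.
  pose proof (T_cong G) as H. unfold Con in H.
  rewrite <- R_eq_T in H. exact H.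
Qed.
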